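(* There is a constant $c>0$ such that the following holds for all $n\ge 1$. Let $q,t_1,\dots,t_n$ be $n+1$ distinct qubits, and for each $i$ let $U_i$ be an arbitrary $2\times 2$ unitary and $G_i$ the controlled-$U_i$ gate with control qubit $q$ and target qubit $t_i$. Then the operator $G_nG_{n-1}\cdots G_1$ can be embedded, using at most $cn$ ancillae, in a quantum circuit of depth at most $c\log n$ (for $n\ge 2$).
   Context: Qubits have computational basis $|0\rangle,|1\rangle$. For a $2\times 2$ unitary $U$, the controlled-$U$ gate on (control, target) is the $4\times4$ unitary $\begin{pmatrix}I&0\\0&U\end{pmatrix}$, i.e. it applies $U$ to the target when the control is $|1\rangle$. A one-layer circuit is a tensor product of arbitrary one-qubit and two-qubit unitary gates acting on pairwise disjoint sets of qubits (each qubit interacts with at most one gate); a circuit of depth $k$ is a product of $k$ one-layer circuits. An operator $F$ on $n'$ qubits is embedded in an operator $M$ on $n'+m$ qubits using $m$ ancillae if $M$ maps the subspace where the $m$ ancilla qubits are all $|0\rangle$ into itself and on that subspace equals $F\otimes\mathbf 1$, i.e. $M(|\psi\rangle\otimes|0\cdots0\rangle)=(F|\psi\rangle)\otimes|0\cdots0\rangle$ for all $|\psi\rangle$. *)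

(* Defs.v *)
From HB Require Import structures.
From mathcomp Require Import all_boot all_order all_algebra.
From mathcomp Require Import spectral.
From mathcomp Require Import complex reals.

Set Implicit Arguments.
Unset Strict Implicit.
Unset Printing Implicit Defensive.

Import Order.TTheory GRing.Theory Num.Theory.
Local Open Scope ring_scope.

Section Quantum.
Variable C : numClosedFieldType.

(* computational basis states of N qubits *)
Definition bits (N : nat) := {ffun 'I_N -> bool}.

(* operators on N qubits, given by their matrix entries <x|A|y> *)
Definition op (N : nat) := bits N -> bits N -> C.

Definition idop N : op N := fun x y => (x == y)%:R.
Definition mulop N (A B : op N) : op N := fun x y => \sum_z A x z * B z y.
Definition applyop N (A : op N) (v : bits N -> C) : bits N -> C :=
  fun x => \sum_y A x y * v y.

Definition b2o (b : bool) : 'I_2 := inord (nat_of_bool b).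
Definition enc2 (a b : bool) : 'I_4 := inord (2 * a + b).

Definition gate1_op N (i : 'I_N) (U : 'M[C]_2) : op N := fun x y =>
  if [forall k, (k != i) ==> (x k == y k)] then U (b2o (x i)) (b2o (y i)) else 0.

Definition gate2_op N (i j : 'I_N) (V : 'M[C]_4) : op N := fun x y =>
  if [forall k, ((k != i) && (k != j)) ==> (x k == y k)]
  then V (enc2 (x i) (x j)) (enc2 (y i) (y j)) else 0.

Inductive gate (N : nat) :=
  | Gate1 of 'I_N & 'M[C]_2
  | Gate2 of 'I_N & 'I_N & 'M[C]_4.

Definition gate_support N (g : gate N) : seq 'I_N :=
  match g with Gate1 i _ => [:: i] | Gate2 i j _ => [:: i; j] end.

Definition valid_gate N (g : gate N) : bool :=
  match g with
  | Gate1 _ U => U \is unitarymx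
  | Gate2 i j V => (i != j) && (V \is unitarymx)
  end.

Definition gate_op N (g : gate N) : op N :=
  match g with Gate1 i U => gate1_op i U | Gate2 i j V => gate2_op i j V end.

(* one layer: a tensor product of unitary gates on pairwise disjoint qubits *)
Definition layer N := seq (gate N).
Definition valid_layer N (L : layer N) : bool :=
  all (@valid_gate N) L && uniq (flatten (map (@gate_support N) L)).
Definition layer_op N (L : layer N) : op N :=
  foldr (fun g acc => mulop (gate_op g) acc) (@idop N) L.

(* a circuit of depth (size c): a product of (size c) one-layer circuits *)
Definition circuit N := seq (layer N).
Definition valid_circuit N (c : circuit N) : bool := all (@valid_layer N) c.
Definition circuit_op N (c : circuit N) : op N :=
  foldr (fun L acc => mulop (layer_op L) acc) (@idop N) c.

(* embedding with m ancillae: the first n qubits are the data qubits, the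
   last m are the ancillae *)
Definition data_part n m (y : bits (n + m)) : bits n := [ffun i => y (lshift m i)].
Definition tensor0 n (m : nat) (psi : bits n -> C) : bits (n + m) -> C := fun y =>
  if [forall j : 'I_m, ~~ y (rshift n j)] then psi (data_part y) else 0.

Definition embeds n m (F : op n) (M : op (n + m)) : Prop :=
  forall (psi : bits n -> C) (y : bits (n + m)),
    applyop M (@tensor0 n m psi) y = @tensor0 n m (applyop F psi) y.

(* controlled-U (control first): block diag(I, U) *)
Definition ctrl (U : 'M[C]_2) : 'M[C]_4 := \matrix_(r, s)
  if (r < 2)%N then (if (s < 2)%N then (r == s)%:R else 0)
  else if (s < 2)%N then 0 else U (inord (r - 2)) (inord (s - 2)).

(* on n+1 qubits, q = qubit 0, t_i = qubit i+1 (i : 'I_n);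
   G_i = controlled-U_i on (q, t_i);  ctrl_chain U = G_{n-1} ... G_0 *)
Definition G_ctrl n (U : 'I_n -> 'M[C]_2) (i : 'I_n) : op n.+1 :=
  gate2_op ord0 (lift ord0 i) (ctrl (U i)).
Definition ctrl_chain n (U : 'I_n -> 'M[C]_2) : op n.+1 :=
  foldl (fun acc i => mulop (G_ctrl U i) acc) (@idop n.+1) (enum 'I_n).

End Quantum.

(* Main.v *)
Require Import Defs.
From HB Require Import structures.
From mathcomp Require Import all_boot all_order all_algebra.
From mathcomp Require Import spectral.
From mathcomp Require Import complex reals.
From mathcomp Require Import zify.
Set Implicit Arguments.
Unset Strict Implicit.
Unset Printing Implicit Defensive.
Import GRing.Theory Num.Theory.
Local Open Scope ring_scope.

Section S.
Variable C : numClosedFieldType.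
Lemma ctrlE (U : 'M[C]_2) a t a' t' :
  ctrl U (enc2 a t) (enc2 a' t') =
  if a then (if a' then U (b2o t) (b2o t') else 0) else (if a' then 0 else (t == t')%:R).
Proof.
case: a; case: t; case: a'; case: t'; rewrite /ctrl mxE /enc2 /b2o ?inordK //=.
all: by rewrite -val_eqE /= !inordK.
Qed.

Definition isperm N (f : bits N -> bits N) (A : op C N) := forall x y, A x y = (x == f y)%:R.

Lemma mul_perm_r N (Z P : op C N) f : isperm f P -> forall y e, mulop Z P y e = Z y (f e).
Proof.
move=> hP y e; rewrite /mulop (bigD1 (f e)) //= big1 ?addr0 => [|z hz].
  by rewrite hP eqxx mulr1.
by rewrite hP (negbTE hz) mulr0.
Qed.

Lemma mul_invol_l N (Z L : op C N) f : isperm f L -> involutive f ->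
  forall y e, mulop L Z y e = Z (f y) e.
Proof.
move=> hL hf y e; rewrite /mulop (bigD1 (f y)) //= big1 ?addr0 => [|z hz].
  by rewrite hL hf eqxx mul1r.
rewrite hL; case: eqP => [hy|]; last by rewrite mul0r.
by move: hz; rewrite hy hf eqxx.
Qed.

Lemma ctrl_block (U : 'M[C]_2) : ctrl U = block_mx 1%:M 0 0 U :> 'M_(2+2).
Proof.
apply/matrixP => r s; rewrite /ctrl mxE.
case: (split_ordP r) => r' ->; case: (split_ordP s) => s' ->;
  rewrite ?block_mxEul ?block_mxEur ?block_mxEdl ?block_mxEdr /= ?mxE ?ltn_ord //.
by congr (U _ _); apply: val_inj; rewrite /= addKn inordK.
Qed.

Lemma ctrl_unitary (U : 'M[C]_2) : U \is unitarymx -> ctrl U \is unitarymx.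
Proof.
move=> /unitarymxP hU; apply/unitarymxP; rewrite ctrl_block.
pose B := block_mx (1%:M : 'M[C]_2) 0 0 U.
suff h : (B *m (B ^t*)%sesqui = 1%:M :> 'M_(2+2)) by exact: h.
rewrite /B tr_block_mx map_block_mx mulmx_block.
rewrite !trmx0 !map_mx0 !mulmx0 !mul0mx !addr0 !add0r trmx1 map_mx1 mulmx1 hU.
by rewrite -scalar_mx_block.
Qed.

Definition Xm : 'M[C]_2 := \matrix_(i, j) (i != j)%:R.

Lemma Xm_unitary : Xm \is unitarymx.
Proof.
apply/unitarymxP/matrixP => i j; rewrite !mxE !big_ord_recl big_ord0 !mxE.
by case: i => [[|[|//]] ?]; case: j => [[|[|//]] ?]; rewrite /= ?rmorph0 ?rmorph1 ?mulr0 ?mul0r ?mulr1 ?addr0 ?add0r.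
Qed.

End S.

Lemma uniq_flat2 (I T : eqType) (f g : I -> T) (s : seq I) :
  uniq s -> injective f -> injective g ->
  (forall i j, i \in s -> j \in s -> f i != g j) ->
  uniq (flatten [seq [:: f j; g j] | j <- s]).
Proof.
move=> us fi gi hfg; elim: s us hfg => [//|a s IH] /= /andP [ha us] hfg.
have hfg' : forall i j, i \in s -> j \in s -> f i != g j.
  by move=> i j hi hj; apply: hfg; rewrite inE ?hi ?hj orbT.
rewrite !inE IH // andbT negb_or -andbA; apply/and3P; split.
- by apply: hfg; rewrite inE eqxx.
- apply/negP => /flatten_mapP [j hj]; rewrite !inE => /orP [/eqP /fi hfj|/eqP hgj].
    by move: ha; rewrite hfj hj.
  have h1 : a \in a :: s by rewrite inE eqxx.
  have h2 : j \in a :: s by rewrite inE hj orbT.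
  by move: (hfg a j h1 h2); rewrite hgj eqxx.
- apply/negP => /flatten_mapP [j hj]; rewrite !inE => /orP [/eqP hfj|/eqP /gi hgj].
    have h1 : a \in a :: s by rewrite inE eqxx.
    have h2 : j \in a :: s by rewrite inE hj orbT.
    by move: (hfg j a h2 h1); rewrite hfj eqxx.
  by move: ha; rewrite hgj hj.
Qed.


Section Fan.
Variable C : numClosedFieldType.
Variable n : nat.
Local Notation N := (n.+1 + n)%N.
Local Notation bN := (bits N).

Definition qb (k : nat) : 'I_N := insubd (lshift n ord0) k.
Lemma val_qb k : (k < N)%N -> val (qb k) = k.
Proof. by move=> hk; rewrite /qb val_insubd hk. Qed.

Definition cnot (c t : nat) (y : bN) : bN :=
  [ffun k => y k (+) ((val k == t) && y (qb c))].

Lemma cnot_eq c t x y : (c < N)%N -> (t < N)%N -> c != t ->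
  (x == cnot c t y) = [&& [forall k, ((k != qb c) && (k != qb t)) ==> (x k == y k)],
     (x (qb c) == y (qb c)) & (x (qb t) == y (qb t) (+) y (qb c))].
Proof.
move=> hc ht hct.
have hv : forall k : 'I_N, (val k == t) = (k == qb t).
  by move=> k; rewrite -val_eqE val_qb.
apply/eqP/and3P => [->|[/forallP h /eqP h1 /eqP h2]].
  split.
  - apply/forallP => k; apply/implyP => /andP [_ hk].
    by rewrite ffunE hv (negbTE hk) addbF.
  - by rewrite ffunE val_qb // (negbTE hct) addbF.
  - by rewrite ffunE val_qb // eqxx.
apply/ffunP => k; rewrite ffunE hv.
case: (eqVneq k (qb t)) => [->|hkt]; first by rewrite h2.
case: (eqVneq k (qb c)) => [->|hkc]; first by rewrite h1 addbF.
by rewrite addbF; apply/eqP; move: (h k); rewrite hkt hkc.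
Qed.

Lemma Xm_b2o a b : Xm C (b2o a) (b2o b) = (a != b)%:R.
Proof. by rewrite mxE; case: a; case: b; rewrite /b2o -?val_eqE /= ?inordK. Qed.

Lemma cnot_perm c t : (c < N)%N -> (t < N)%N -> c != t ->
  isperm (cnot c t) (gate2_op (qb c) (qb t) (ctrl (Xm C))).
Proof.
move=> hc ht hct x y; rewrite cnot_eq // /gate2_op.
case: [forall _, _] => //=; rewrite ctrlE.
by case: (x (qb c)); case: (y (qb c)); case: (x (qb t)); case: (y (qb t));
  rewrite ?Xm_b2o.
Qed.

Lemma perm_mul (A B : op C N) fA fB : isperm fA A -> isperm fB B ->
  isperm (fA \o fB) (mulop A B).
Proof. by move=> hA hB x y; rewrite (mul_perm_r _ hB) hA. Qed.

Definition cnl (ps : seq (nat * nat)) (x : bN) : bN :=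
  [ffun k => x k (+) has (fun p => (p.2 == val k) && x (qb p.1)) ps].

Definition mkL (ps : seq (nat * nat)) : layer C N :=
  [seq Gate2 (qb p.1) (qb p.2) (ctrl (Xm C)) | p <- ps].

Definition goodps (ps : seq (nat * nat)) :=
  [/\ uniq (flatten [seq [:: p.1; p.2] | p <- ps]),
      all (fun p => (p.1 < N) && (p.2 < N))%N ps &
      all (fun p => p.1 \notin map snd ps) ps].

Lemma goodps_tail p ps : goodps (p :: ps) -> goodps ps.
Proof.
case=> /= /andP [_ /andP [_ hu]] /andP [_ ha] /andP [_ hc]; split => //.
by apply/allP => q /(allP hc); rewrite in_cons negb_or => /andP [].
Qed.

Lemma cnl_ctrl ps (x : bN) c : (c < N)%N -> c \notin map snd ps -> x (qb c) = cnl ps x (qb c).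
Proof.
move=> hc hn; rewrite ffunE val_qb // -[LHS]addbF; congr addb.
apply/esym/negbTE/hasP => [[p hp /andP [/eqP hpc _]]].
by move: hn; rewrite -hpc map_f.
Qed.

Lemma cnl_layer ps : goodps ps -> isperm (cnl ps) (layer_op (mkL ps)).
Proof.
elim: ps => [_ x y|[c t] ps IH hg].
  by rewrite /layer_op /= /idop; congr (_%:R); congr (_ == _); apply/ffunP => k; rewrite ffunE addbF.
have hg' := goodps_tail hg.
case: hg => /= /andP [hu1 /andP [hu2 hu3]] /andP [/andP [hc ht] _] /andP [hcn _].
have hct : c != t by move: hu1; rewrite !inE negb_or => /andP [].
have htn : t \notin map snd ps.
  apply: contra hu2 => /mapP [[c' t'] hp /= ->]; apply/flatten_mapP; exists (c', t') => //.
  by rewrite !inE eqxx orbT.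
move=> x y; rewrite /layer_op /= (perm_mul (cnot_perm hc ht hct) (IH hg') x y) /=.
congr (_%:R); congr (_ == _); apply/ffunP => k; rewrite !ffunE.
have hcn' : c \notin map snd ps by move: hcn; rewrite in_cons negb_or => /andP [].
have -> : has (fun p => (p.2 == val (qb c)) && y (qb p.1)) ps = false.
  apply/negbTE/hasP => [[p hp /andP [/eqP hpk _]]].
  by move: hcn'; rewrite -(val_qb hc) -hpk map_f.
rewrite addbF /=.
case: (eqVneq (val k) t) => [hk|hk].
  have -> : has (fun p => (p.2 == val k) && y (qb p.1)) ps = false.
    apply/negbTE/hasP => [[p hp /andP [/eqP hpk _]]].
    by move: htn; rewrite -hk -hpk map_f.
  by rewrite /= addbF orbF.
by rewrite /= addbF.
Qed.


Lemma cnl_invol ps : goodps ps -> involutive (cnl ps).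
Proof.
move=> [_ ha hc] x; apply/ffunP => k; rewrite ffunE.
rewrite (@eq_in_has _ _ (fun p => (p.2 == val k) && x (qb p.1))) => [|p hp].
  by rewrite ffunE addbK.
have /andP [hp1 _] := allP ha p hp.
by rewrite /= -cnl_ctrl // (allP hc p hp).
Qed.

Definition app (pss : seq (seq (nat * nat))) (x : bN) : bN :=
  foldl (fun x ps => cnl ps x) x pss.

Lemma circ_perm pss : (forall ps, ps \in pss -> goodps ps) ->
  isperm (fun e => foldr (fun ps e => cnl ps e) e pss) (circuit_op (map mkL pss)).
Proof.
elim: pss => [_ x y|ps pss IH hg] //=.
apply: perm_mul; first by apply: cnl_layer; apply: hg; rewrite inE eqxx.
by apply: IH => q hq; apply: hg; rewrite inE hq orbT.
Qed.

Lemma circ_left pss (Z : op C N) x y : (forall ps, ps \in pss -> goodps ps) ->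
  foldr (fun L acc => mulop (layer_op L) acc) Z (map mkL pss) x y = Z (app pss x) y.
Proof.
elim: pss x => [//|ps pss IH] x hg /=.
have hps : goodps ps by apply: hg; rewrite inE eqxx.
rewrite (mul_invol_l _ (cnl_layer hps) (cnl_invol hps)) IH //.
by move=> q hq; apply: hg; rewrite inE hq orbT.
Qed.

Lemma app_inj pss : (forall ps, ps \in pss -> goodps ps) -> injective (app pss).
Proof.
elim: pss => [_ x y //|ps pss IH hg] x y /=.
have hps : goodps ps by apply: hg; rewrite inE eqxx.
move=> /IH h; apply: (can_inj (cnl_invol hps)); apply: h.
by move=> q hq; apply: hg; rewrite inE hq orbT.
Qed.

Lemma circ_sandwich pss (mid : layer C N) x y : (forall ps, ps \in pss -> goodps ps) ->
  circuit_op (map mkL pss ++ mid :: rev (map mkL pss)) x y = layer_op mid (app pss x) (app pss y).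
Proof.
move=> hg; rewrite /circuit_op foldr_cat circ_left // /=.
rewrite -map_rev (mul_perm_r _ (circ_perm _)); last by move=> q; rewrite mem_rev; apply: hg.
congr (layer_op mid _ _); by rewrite /app -[in RHS](revK pss) foldl_rev.
Qed.

Definition anc (x : bN) : bits n := [ffun j => x (rshift n.+1 j)].
Definition dat (x : bN) : bits n.+1 := @data_part n.+1 n x.
Definition join (d : bits n.+1) (a : bits n) : bN :=
  [ffun k => match split k with inl i => d i | inr j => a j end].

Lemma joinL d a i : join d a (lshift n i) = d i.
Proof. by rewrite ffunE (unsplitK (inl _ i)). Qed.
Lemma joinR d a j : join d a (rshift n.+1 j) = a j.
Proof. by rewrite ffunE (unsplitK (inr _ j)). Qed.
Lemma dat_join d a : dat (join d a) = d.
Proof. by apply/ffunP => i; rewrite ffunE joinL. Qed.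
Lemma anc_join d a : anc (join d a) = a.
Proof. by apply/ffunP => i; rewrite ffunE joinR. Qed.
Lemma join_eta x : join (dat x) (anc x) = x.
Proof.
by apply/ffunP => k; case: (split_ordP k) => [i ->|j ->]; rewrite ?joinL ?joinR ffunE.
Qed.

Lemma sum_anc (h : bN -> C) a :
  \sum_(x : bN) (if anc x == a then h x else 0) = \sum_(d : bits n.+1) h (join d a).
Proof.
rewrite (reindex (fun p : bits n.+1 * bits n => join p.1 p.2)) /=; last first.
  exists (fun x => (dat x, anc x)) => [[d b] _|x _] /=; first by rewrite dat_join anc_join.
  by rewrite join_eta.
rewrite -(pair_big xpredT xpredT (fun d b => if anc (join d b) == a then h (join d b) else 0)) /=.
apply: eq_bigr => d _; rewrite -big_mkcond /=.
under eq_bigl => b do rewrite anc_join.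
by rewrite big_pred1_eq.
Qed.


Lemma qb_l (i : 'I_n.+1) : qb i = lshift n i.
Proof. by apply: val_inj; rewrite /= val_qb // ltn_addr. Qed.
Lemma qb_r (j : 'I_n) : qb (n.+1 + j) = rshift n.+1 j.
Proof. by apply: val_inj; rewrite /= val_qb // ltn_add2l. Qed.

Lemma qb0 : qb 0 = lshift n ord0.
Proof. exact: (qb_l ord0). Qed.
Lemma split_l (i : 'I_n.+1) : split (lshift n i) = inl i.
Proof. exact: (unsplitK (inl _ i)). Qed.
Lemma split_r (j : 'I_n) : split (rshift n.+1 j) = inr j.
Proof. exact: (unsplitK (inr _ j)). Qed.

Definition fl k : seq (nat * nat) :=
  [seq (n.+1 + j, n.+1 + j + 2 ^ k)%N | j <- [seq j <- iota 0 (2 ^ k) | (j + 2 ^ k < n)%N]].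
Definition l0 : seq (nat * nat) := [:: (0, n.+1)]%N.
Definition fan K := l0 :: [seq fl k | k <- iota 0 K].

Lemma good_fl k : goodps (fl k).
Proof.
set h := (2 ^ k)%N.
split.
- rewrite -map_comp.
  apply: (@uniq_flat2 _ _ (fun j => n.+1 + j)%N (fun j => n.+1 + j + h)%N).
  + by rewrite filter_uniq // iota_uniq.
  + by move=> a b /= hab; lia.
  + by move=> a b /= hab; lia.
  + move=> a b; rewrite !mem_filter !mem_iota => /andP [_ /andP [_ ha]] _.
    by apply/eqP => /= hab; lia.
- apply/allP => p /mapP [j]; rewrite mem_filter mem_iota => /andP [hj _] -> /=.
  by apply/andP; split; lia.
- apply/allP => p /mapP [j]; rewrite mem_filter mem_iota => /andP [_ /andP [_ hj]] -> /=.
  apply/negP => /mapP [p' /mapP [j' _ ->] /=] hjj; lia.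
Qed.

Lemma good_l0 : (0 < n)%N -> goodps l0.
Proof.
move=> hn; split => //=.
by rewrite andbT; lia.
Qed.

Definition Sst k (d : bits n.+1) := join d [ffun j : 'I_n => d ord0 && (val j < 2 ^ k)%N].

Lemma cnl_l0 d : cnl l0 (join d [ffun => false]) = Sst 0 d.
Proof.
apply/ffunP => kk; rewrite ffunE; case: (split_ordP kk) => [i ->|j ->] /=;
  rewrite ?joinL ?joinR !ffunE /=.
  by rewrite (gtn_eqF (ltn_ord i)) addbF.
rewrite qb0 split_l orbF.
have -> : (n.+1 == n.+1 + j)%N = (j < 1)%N.
  by apply/idP/idP => [/eqP|] h; [|apply/eqP]; lia.
by rewrite andbC.
Qed.

Lemma cnl_fl k d : cnl (fl k) (Sst k d) = Sst k.+1 d.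
Proof.
apply/ffunP => kk; rewrite ffunE; case: (split_ordP kk) => [i ->|j ->] /=;
  rewrite ?joinL ?joinR ?ffunE /=.
  rewrite -[RHS]addbF; congr addb; apply/negbTE/hasP => [[p /mapP [j' _ ->] /=]].
  by move=> /andP [/eqP hp _]; move: (ltn_ord i); lia.
set h := (2 ^ k)%N.
have -> : has (fun p => (p.2 == n.+1 + j)%N && Sst k d (qb p.1)) (fl k) =
          [&& d ord0, (h <= j)%N & (j < h + h)%N].
  apply/hasP/and3P => [[p /mapP [j']]|[hd hb hb2]].
    rewrite mem_filter mem_iota => /andP [hj' /andP [_ hj'2]] -> /= /andP [/eqP hp].
    have hj'n : (j' < n)%N by lia.
    rewrite (qb_r (Ordinal hj'n)) /Sst joinR ffunE /= => /andP [hd _].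
    by split => //; lia.
  have hj'n : (j - h < n)%N by move: (ltn_ord j); lia.
  exists (n.+1 + (j - h), n.+1 + (j - h) + h)%N.
    apply/mapP; exists (j - h)%N => //; rewrite mem_filter mem_iota.
    by move: (ltn_ord j) => hjn; apply/and3P; split; lia.
  apply/andP; split; first by apply/eqP => /=; lia.
  rewrite /= (qb_r (Ordinal hj'n)) /Sst joinR ffunE /= hd /=.
  by lia.
rewrite expnS mul2n -addnn -/h; case: (d ord0) => //=.
case: (ltnP j h) => hj //=.
by rewrite ltn_addr.
Qed.

Lemma app_fl K m d : app [seq fl k | k <- iota m K] (Sst m d) = Sst (m + K) d.
Proof.
elim: K m => [|K IH] m; first by rewrite addn0.
by rewrite /= -/(app _ _) cnl_fl IH; congr Sst; rewrite addSnnS.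
Qed.

Lemma app_fan K d : app (fan K) (join d [ffun => false]) = Sst K d.
Proof. by rewrite /fan /= -/(app _ _) cnl_l0 app_fl. Qed.

Lemma Sst_full K d : (n <= 2 ^ K)%N -> Sst K d = join d [ffun => d ord0].
Proof.
move=> hK; congr join; apply/ffunP => j; rewrite !ffunE.
have hj : (j < 2 ^ K)%N by move: (ltn_ord j); lia.
by rewrite hj andbT.
Qed.

Lemma dat_cnl ps x : (forall p, p \in ps -> n < p.2)%N -> dat (cnl ps x) = dat x.
Proof.
move=> hp; apply/ffunP => i; rewrite !ffunE /= -[RHS]addbF; congr addb.
apply/negbTE/hasP => [[p /hp hp2 /andP [/eqP he _]]].
move: (ltn_ord i) he => /= hi he.
by rewrite he ltnNge -ltnS hi in hp2.
Qed.

Lemma dat_app (pss : seq (seq (nat * nat))) (x : bN) : (forall ps p, ps \in pss -> p \in ps -> n < p.2)%N ->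
  dat (app pss x) = dat x.
Proof.
elim: pss x => [//|ps pss IH] x hp /=.
rewrite -/(app _ _) IH ?dat_cnl //.
  by move=> p; apply: hp; rewrite inE eqxx.
by move=> ps' p hps; apply: hp; rewrite inE hps orbT.
Qed.

Lemma good_fan K : (0 < n)%N -> forall ps, ps \in fan K -> goodps ps.
Proof.
move=> hn ps; rewrite inE => /orP [/eqP ->|/mapP [k _ ->]]; first exact: good_l0.
exact: good_fl.
Qed.

Lemma fan_targets K : forall ps p, ps \in fan K -> p \in ps -> (n < p.2)%N.
Proof.
move=> ps p; rewrite inE => /orP [/eqP ->|/mapP [k _ ->]]; first by rewrite inE => /eqP ->.
by move=> /mapP [j _ ->] /=; lia.
Qed.



Lemma G_zero (V : 'M[C]_2) (t : 'I_n.+1) (dx dw : bits n.+1) :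
  dx ord0 != dw ord0 -> gate2_op ord0 t (ctrl V) dx dw = 0.
Proof.
move=> h; rewrite /gate2_op; case: [forall _, _] => //; rewrite ctrlE.
by move: h; case: (dx ord0); case: (dw ord0).
Qed.

Lemma crux (V : 'M[C]_2) (i : 'I_n) (x : bN) (dw : bits n.+1) :
  gate2_op (rshift n.+1 i) (lshift n (lift ord0 i)) (ctrl V) x (join dw [ffun => dw ord0])
  = (anc x == [ffun => dw ord0])%:R * gate2_op ord0 (lift ord0 i) (ctrl V) (dat x) dw.
Proof.
set b := dw ord0; set a := rshift n.+1 i; set t := lshift n (lift ord0 i).
rewrite {1}/gate2_op [join _ _ a]joinR [join _ _ t]joinL ffunE.
have hdx : forall k, dat x k = x (lshift n k) by move=> k; rewrite ffunE.
case: (eqVneq (x a) b) => hxa; last first.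
  have -> : (anc x == [ffun => b]) = false.
    by apply/negbTE; apply: contra hxa => /eqP /ffunP /(_ i); rewrite !ffunE => ->.
  rewrite mul0r; case: [forall _, _] => //; rewrite ctrlE.
  by move: hxa; case: (x a); case: b.
case: (eqVneq (x (lshift n ord0)) b) => hx0; last first.
  have -> : [forall k, (k != a) && (k != t) ==> (x k == join dw [ffun=> b] k)] = false.
    apply/negbTE/forallP => /(_ (lshift n ord0)).
    rewrite /a /t eq_lrshift eq_lshift /= joinL => /eqP h; by rewrite h eqxx in hx0.
  by rewrite G_zero ?mulr0 // hdx.

have -> : [forall k, (k != a) && (k != t) ==> (x k == join dw [ffun=> b] k)] =
  (anc x == [ffun => b]) &&
  [forall k, (k != ord0) && (k != lift ord0 i) ==> (dat x k == dw k)].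
  apply/forallP/andP => [h|[/eqP hA /forallP hB] k].
    split.
      apply/eqP/ffunP => j; rewrite !ffunE.
      case: (eqVneq j i) => [->|hji]; first exact: hxa.
      have := h (rshift n.+1 j); rewrite /a /t eq_rshift hji eq_rlshift /= joinR ffunE.
      by move/eqP.
    apply/forallP => k; apply/implyP => /andP [hk0 hkt].
    have := h (lshift n k); rewrite /a /t eq_lrshift eq_lshift hkt /= joinL.
    by rewrite hdx.
  apply/implyP => /andP; case: (split_ordP k) => [k' ->|j ->] [hka hkt].
    rewrite joinL; case: (eqVneq k' ord0) => [->|hk0]; first by rewrite hx0.
    have := hB k'; rewrite hk0 /=.
    rewrite hdx => /implyP; apply; move: hkt; by rewrite /t eq_lshift.
  have := congr1 (fun f : bits n => f j) hA; rewrite !ffunE => ->.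
  by rewrite ?split_r ?ffunE.
rewrite /gate2_op hxa !hdx hx0 -/b.
by case: (anc x == _); case: [forall _, _]; rewrite ?mul1r ?mul0r.
Qed.

Variable U : 'I_n -> 'M[C]_2.

Definition CUb i : op C N := gate2_op (rshift n.+1 i) (lshift n (lift ord0 i)) (ctrl (U i)).
Definition Wl (s : seq 'I_n) : op C N := foldr (fun i acc => mulop (CUb i) acc) (@idop C N) s.
Definition Fl (s : seq 'I_n) : op C n.+1 := foldr (fun i acc => mulop (G_ctrl U i) acc) (@idop C n.+1) s.

Lemma Fl_ctrl s dx d : Fl s dx d != 0 -> dx ord0 = d ord0.
Proof.
elim: s dx => [|i s IH] dx /=.
  by rewrite /idop; case: (eqVneq dx d) => [->|hne] //; rewrite eqxx.
move=> hnz; case: (eqVneq (dx ord0) (d ord0)) => // hne; move: hnz.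
rewrite /mulop big1 ?eqxx // => dw _.
case: (eqVneq (Fl s dw d) 0) => [->|/IH h]; first by rewrite mulr0.
by rewrite /G_ctrl G_zero ?mul0r // h.
Qed.

Lemma Wl_eq s x d :
  Wl s x (join d [ffun => d ord0]) = (anc x == [ffun => d ord0])%:R * Fl s (dat x) d.
Proof.
elim: s x => [|i s IH] x /=.
  rewrite /idop -natrM mulnb; congr (_%:R); congr nat_of_bool.
  apply/idP/idP => [/eqP ->|/andP [/eqP h1 /eqP h2]].
    by rewrite anc_join dat_join !eqxx.
  by rewrite -h1 -h2 join_eta.
rewrite /mulop.
under eq_bigr => w _ do rewrite IH mulrCA mulr_natl mulrb.
rewrite sum_anc mulr_sumr; apply: eq_bigr => dw _; rewrite dat_join.
case: (eqVneq (Fl s dw d) 0) => [->|/Fl_ctrl h]; first by rewrite !mulr0.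
by rewrite -h /CUb crux mulrA.
Qed.

Definition midL : layer C N :=
  [seq Gate2 (rshift n.+1 i) (lshift n (lift ord0 i)) (ctrl (U i)) | i <- rev (enum 'I_n)].

Lemma midL_op : layer_op midL = Wl (rev (enum 'I_n)).
Proof. by rewrite /layer_op /midL foldr_map. Qed.

Lemma chain_Fl : ctrl_chain U = Fl (rev (enum 'I_n)).
Proof. by rewrite /ctrl_chain -[in LHS](revK (enum 'I_n)) foldl_rev. Qed.

Lemma midL_valid : (forall k, U k \is unitarymx) -> valid_layer midL.
Proof.
move=> hU; rewrite /valid_layer; apply/andP; split.
  by rewrite /midL all_map; apply/allP => i _ /=; rewrite eq_rlshift ctrl_unitary.
rewrite /midL -map_comp.
apply: (@uniq_flat2 _ _ (fun i => rshift n.+1 i) (fun i => lshift n (lift ord0 i))).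
- by rewrite rev_uniq enum_uniq.
- exact: rshift_inj.
- by move=> a b /lshift_inj /lift_inj.
- by move=> a b _ _; rewrite eq_rlshift.
Qed.




Lemma mkL_valid ps : goodps ps -> valid_layer (mkL ps).
Proof.
case=> hu ha hc; rewrite /valid_layer; apply/andP; split.
  rewrite /mkL all_map; apply/allP => p hp /=.
  have /andP [h1 h2] := allP ha p hp.
  rewrite ctrl_unitary ?Xm_unitary // andbT -val_eqE !val_qb //.
  apply/negP => /eqP he; have := allP hc p hp; rewrite he.
  by rewrite map_f.
rewrite /mkL -map_comp; apply: (@map_uniq _ _ val); rewrite map_flatten -map_comp.
have -> : [seq (map val \o (gate_support (N:=N) \o (fun p => Gate2 (qb p.1) (qb p.2) (ctrl (Xm C))))) p | p <- ps]
  = [seq [:: p.1; p.2] | p <- ps].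
  apply/eq_in_map => p hp /=; have /andP [h1 h2] := allP ha p hp.
  by rewrite !val_qb.
exact: hu.
Qed.

Lemma tens_anc (x : bN) : [forall j, ~~ x (rshift n.+1 j)] = (anc x == [ffun => false]).
Proof.
apply/forallP/eqP => [h|h j].
  by apply/ffunP => j; rewrite !ffunE; apply/negbTE/h.
by have := congr1 (fun f : bits n => f j) h; rewrite !ffunE => ->.
Qed.

Lemma mul_if (a c : C) (b : bool) : a * (if b then c else 0) = if b then a * c else 0.
Proof. by case: b; rewrite ?mulr0. Qed.

End Fan.

Theorem proposition2 :
  exists c : nat, (0 < c)%N /\
  forall (R : realType) (n : nat) (U : 'I_n -> 'M[R[i]]_2),
    (1 <= n)%N ->
    (forall k, U k \is unitarymx) ->
    exists (m : nat) (M : circuit R[i] (n.+1 + m)),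
      [/\ valid_circuit M,
          (m <= c * n)%N,
          ((2 <= n)%N -> (size M <= c * up_log 2 n)%N)
        & embeds (ctrl_chain U) (circuit_op M)].
Proof.
exists 5%N; split => // R n U hn hU.
pose K := up_log 2 n.
pose pss := fan n K.
have hg := @good_fan n K hn.
exists n, (map (@mkL R[i] n) pss ++ midL U :: rev (map (@mkL R[i] n) pss)).
split.
- have hv : all (@valid_layer R[i] _) (map (@mkL R[i] n) pss).
    by rewrite all_map; apply/allP => ps hps; apply: mkL_valid; apply: hg.
  by rewrite /valid_circuit all_cat hv -cat1s all_cat all_seq1 all_rev hv midL_valid.
- by rewrite leq_pmull.
- move=> h2; rewrite size_cat /= size_rev !size_map /pss /fan /= size_map size_iota.
  have : (0 < K)%N by rewrite /K up_log_gt0.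
  by rewrite size_map size_iota -/K; lia.
have hK : (n <= 2 ^ K)%N by apply: up_logP.
have ht := @fan_targets n K.
move=> psi y.
have key : forall d, circuit_op (map (@mkL R[i] n) pss ++ midL U :: rev (map (@mkL R[i] n) pss))
    y (join d [ffun=> false]) =
    (anc y == [ffun => false])%:R * Fl U (rev (enum 'I_n)) (dat y) d.
  move=> d; rewrite circ_sandwich; last exact: hg.
  rewrite app_fan Sst_full // midL_op Wl_eq dat_app //.
  case: (eqVneq (Fl U (rev (enum 'I_n)) (dat y) d) 0) => [->|/Fl_ctrl h]; first by rewrite !mulr0.
  congr (_%:R * _); congr nat_of_bool; rewrite -h.
  have hay : app pss y = join (dat y) (anc (app pss y)).
    by rewrite -[in RHS](dat_app y ht) join_eta.
  apply/eqP/eqP => ha.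
    have e : app pss y = app pss (join (dat y) [ffun=>false]).
      by rewrite app_fan Sst_full // hay ha.
    by rewrite (app_inj hg e) anc_join.
  have -> : y = join (dat y) [ffun=>false] by rewrite -ha join_eta.
  by rewrite app_fan Sst_full // anc_join dat_join.
rewrite /applyop /tensor0 tens_anc chain_Fl.
under eq_bigr => x _ do rewrite tens_anc mul_if.
rewrite sum_anc.
under eq_bigr => d _ do rewrite key -[data_part _]/(dat _) dat_join.
rewrite -[data_part y]/(dat y).
case: (anc y == _).
  by apply: eq_bigr => d _; rewrite mul1r.
by rewrite big1 // => d _; rewrite !mul0r.
Qed.
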